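(* Consider the twenty vectors $E_i$ ($1\le i\le 4$), $E_{ij}$, $F_{ij}$ ($1\le i<j\le 4$), $G_i$ ($1\le i\le 4$), each of square $-2$, with pairwise intersection numbers as given in the context, and their Coxeter diagram $\Gamma$. Then $\Gamma$ has exactly $29$ parabolic subdiagrams of maximal rank $8$, namely (listing type; number of such subdiagrams; number of vertices taken from $\{E_i,E_{ij}\}$, from $\{F_{ij}\}$, from $\{G_i\}$): 1) $\tilde E_7+\tilde A_1$; $12$; $8,1,1$; 2) $\tilde E_6+\tilde A_2$; $4$; $7,3,0$; 3) $\tilde D_6+\tilde A_1+\tilde A_1$; $6$; $8,1,2$; 4) $\tilde A_7+\tilde A_1$; $3$; $8,2,0$; 5) $\tilde A_5+\tilde A_2+\tilde A_1$; $4$; $7,3,1$.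
   Context: Intersection numbers among the twenty distinct vectors: $(E_i,E_{jk})=1$ if $i\in\{j,k\}$, and all other pairs among $\{E_i,E_{jk}\}$ are $0$; $(F_{ij},F_{kl})=1$ if $|\{i,j\}\cap\{k,l\}|=1$ and $2$ if $\{i,j\}\cap\{k,l\}=\emptyset$; $(E_k,F_{ij})=0$; $(E_{kl},F_{ij})=2$ if $\{k,l\}=\{i,j\}$ and $0$ otherwise; $(G_i,G_j)=2$ for $i\ne j$; $(G_i,E_j)=2$ if $i=j$ and $0$ otherwise; $(G_i,E_{kl})=0$; $(G_i,F_{kl})=2$ if $i\notin\{k,l\}$ and $0$ if $i\in\{k,l\}$. (These are classes in the Néron–Severi lattice modulo torsion of an Enriques surface.) The Coxeter diagram has the twenty vectors as vertices, two vertices with intersection $1$ joined by a simple edge, with intersection $2$ by a thick (double) edge, and with intersection $0$ not joined. A parabolic subdiagram is a subdiagram each of whose connected components is an extended (affine) Dynkin diagram $\tilde A_n,\tilde D_n,\tilde E_n$ (where $\tilde A_1$ is two vertices joined by a thick edge); its rank is the number of vertices minus the number of components. *)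

(* Defs.v *)
From mathcomp Require Import all_boot all_algebra.
Set Implicit Arguments. Unset Strict Implicit. Unset Printing Implicit Defensive.

(* Indices 1..4 of the paper are represented by 'I_4 = {0,1,2,3}. *)
Definition pair4 := {s : {set 'I_4} | #|s| == 2}.

Definition V := ((('I_4 + pair4) + pair4) + 'I_4)%type.
Definition vE (i : 'I_4) : V := inl (inl (inl i)).
Definition vEE (p : pair4) : V := inl (inl (inr p)).
Definition vF (p : pair4) : V := inl (inr p).
Definition vG (i : 'I_4) : V := inr i.

Definition Eset : {set V} := [set v | match v with inl (inl _) => true | _ => false end].
Definition Fset : {set V} := [set v | match v with inl (inr _) => true | _ => false end].
Definition Gset : {set V} := [set v | match v with inr _ => true | _ => false end].

Definition offdiag (u v : V) : nat :=
  match u, v with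
  | inl (inl (inl _)), inl (inl (inl _)) => 0
  | inl (inl (inl i)), inl (inl (inr p)) => if i \in val p then 1 else 0
  | inl (inl (inl _)), inl (inr _) => 0
  | inl (inl (inl i)), inr j => if i == j then 2 else 0
  | inl (inl (inr p)), inl (inl (inl i)) => if i \in val p then 1 else 0
  | inl (inl (inr _)), inl (inl (inr _)) => 0
  | inl (inl (inr p)), inl (inr q) => if p == q then 2 else 0
  | inl (inl (inr _)), inr _ => 0
  | inl (inr _), inl (inl (inl _)) => 0
  | inl (inr p), inl (inl (inr q)) => if p == q then 2 else 0
  | inl (inr p), inl (inr q) =>
      if #|val p :&: val q| == 1 then 1
      else if #|val p :&: val q| == 0 then 2 else 0
  | inl (inr p), inr i => if i \in val p then 0 else 2
  | inr i, inl (inl (inl j)) => if i == j then 2 else 0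
  | inr _, inl (inl (inr _)) => 0
  | inr i, inl (inr p) => if i \in val p then 0 else 2
  | inr i, inr j => if i == j then 0 else 2
  end.

Definition inter (u v : V) : int := if u == v then (-2)%R else Posz (offdiag u v).

(* Coxeter diagram: weight of the edge between u and v
   (0 = no edge, 1 = simple edge, 2 = thick edge). *)
Definition wt (u v : V) : nat := if u == v then 0 else `|inter u v|%N.

Inductive AffType := tA of nat | tD of nat | tE of nat.

Definition aff_size (t : AffType) : nat :=
  match t with tA n | tD n | tE n => n.+1 end.

Definition aff_valid (t : AffType) : bool :=
  match t with
  | tA n => 1 <= n
  | tD n => 4 <= n
  | tE n => (6 <= n) && (n <= 8)
  end.

Definition aff_e0 (t : AffType) (i j : nat) : bool :=
  match t with
  | tA n => (j == i.+1) || ((i == n) && (j == 0))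
  | tD n => ((i == 0) && (j == 2)) || ((i == 1) && (j == 2))
            || [&& 2 <= i, i <= n - 3 & j == i.+1]
            || ((i == n - 2) && (j == n - 1)) || ((i == n - 2) && (j == n))
  | tE 6 => (i, j) \in [:: (0,1); (1,2); (0,3); (3,4); (0,5); (5,6)]
  | tE 7 => (i, j) \in [:: (0,1); (1,2); (2,3); (0,4); (4,5); (5,6); (0,7)]
  | tE 8 => (i, j) \in [:: (0,1); (1,2); (2,3); (3,4); (4,5); (0,6); (6,7); (0,8)]
  | tE _ => false
  end.

(* edge weights of the standard diagram; tilde A_1 has a thick edge *)
Definition aff_wt (t : AffType) (i j : nat) : nat :=
  if aff_e0 t i j || aff_e0 t j i then
    (match t with tA 1 => 2 | _ => 1 end)
  else 0.

Definition comp_of_type (C : {set V}) (t : AffType) : bool :=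
  [exists f : {ffun 'I_(aff_size t) -> V},
     [&& injectiveb f, C == [set f i | i : 'I_(aff_size t)] &
         [forall a : 'I_(aff_size t), forall b : 'I_(aff_size t),
            wt (f a) (f b) == aff_wt t a b]]].

(* C induces an extended Dynkin diagram (n bounded by 20 since |C| <= 20) *)
Definition is_affine (C : {set V}) : bool :=
  [exists n : 'I_21,
     [|| aff_valid (tA n) && comp_of_type C (tA n),
         aff_valid (tD n) && comp_of_type C (tD n) |
         aff_valid (tE n) && comp_of_type C (tE n)]].

Definition adj (S : {set V}) : rel V :=
  fun u v => [&& u \in S, v \in S & wt u v != 0].

Definition comps (S : {set V}) : {set {set V}} :=
  [set [set v in S | connect (adj S) u v] | u in S].

Definition parabolic (S : {set V}) : bool := [forall C in comps S, is_affine C].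

Definition prank (S : {set V}) : nat := #|S| - #|comps S|.

Definition ncomp (S : {set V}) (t : AffType) : nat :=
  #|[set C in comps S | comp_of_type C t]|.

Definition type_E7A1 S := [&& #|comps S| == 2, ncomp S (tE 7) == 1 & ncomp S (tA 1) == 1].
Definition type_E6A2 S := [&& #|comps S| == 2, ncomp S (tE 6) == 1 & ncomp S (tA 2) == 1].
Definition type_D6A1A1 S := [&& #|comps S| == 3, ncomp S (tD 6) == 1 & ncomp S (tA 1) == 2].
Definition type_A7A1 S := [&& #|comps S| == 2, ncomp S (tA 7) == 1 & ncomp S (tA 1) == 1].
Definition type_A5A2A1 S :=
  [&& #|comps S| == 3, ncomp S (tA 5) == 1, ncomp S (tA 2) == 1 & ncomp S (tA 1) == 1].

Definition type_class (ty : {set V} -> bool) (c e f g : nat) : Prop :=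
  #|[set S : {set V} | [&& parabolic S, prank S == 8 & ty S]]| = c /\
  (forall S : {set V}, parabolic S -> prank S = 8 -> ty S ->
     [/\ #|S :&: Eset| = e, #|S :&: Fset| = f & #|S :&: Gset| = g]).

(* Main.v *)
Require Import Defs.
From mathcomp Require Import all_boot all_algebra.
From mathcomp Require Import zify.
Set Implicit Arguments. Unset Strict Implicit. Unset Printing Implicit Defensive.

(* Proof by certified computation: a concrete nat model of the
   20 vertices (vx), enumeration of all affine subdiagrams (embsN/AffN) and of
   all parabolic families (famsG), linked to the definitions. *)

Definition pa q := nth 0 [:: 0;0;0;1;1;2] q.
Definition pb q := nth 1 [:: 1;2;3;2;3;3] q.
Definition memN (i q : nat) := (i == pa q) || (i == pb q).
Definition capN q q' := memN (pa q) q' + memN (pb q) q'.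
Definition offdN (k l : nat) : nat :=
 if k < 4 then
   if l < 4 then 0 else if l < 10 then (if memN k (l-4) then 1 else 0)
   else if l < 16 then 0 else (if k == l - 16 then 2 else 0)
 else if k < 10 then
   if l < 4 then (if memN l (k-4) then 1 else 0) else if l < 10 then 0
   else if l < 16 then (if k-4 == l-10 then 2 else 0) else 0
 else if k < 16 then
   if l < 4 then 0 else if l < 10 then (if k-10 == l-4 then 2 else 0)
   else if l < 16 then (if capN (k-10) (l-10) == 1 then 1 else if capN (k-10) (l-10) == 0 then 2 else 0)
   else (if memN (l-16) (k-10) then 0 else 2)
 else
   if l < 4 then (if k-16 == l then 2 else 0) else if l < 10 then 0
   else if l < 16 then (if memN (k-16) (l-10) then 0 else 2)
   else (if k-16 == l-16 then 0 else 2).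
Definition wtN k l := if k == l then 0 else offdN k l.

Lemma pa_lt q : pa q < 4. Proof. by case: q => [|[|[|[|[|[|q]]]]]]; rewrite /pa /pb /= ?nth_nil. Qed.
Lemma pb_lt q : pb q < 4. Proof. by case: q => [|[|[|[|[|[|q]]]]]]; rewrite /pa /pb /= ?nth_nil. Qed.
Lemma pab_lt q : pa q < pb q. Proof. by case: q => [|[|[|[|[|[|q]]]]]]; rewrite /pa /pb /= ?nth_nil. Qed.

Definition o4 (k : nat) : 'I_4 := inord k.
Lemma o4K k : k < 4 -> val (o4 k) = k. Proof. exact: inordK. Qed.
Lemma o4_eq k l : k < 4 -> l < 4 -> (o4 k == o4 l) = (k == l).
Proof. by move=> hk hl; rewrite -val_eqE /= !o4K. Qed.

Definition ps q : {set 'I_4} := [set o4 (pa q); o4 (pb q)].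
Lemma ps_card q : #|ps q| == 2.
Proof. rewrite cards2 o4_eq ?pa_lt ?pb_lt //. by rewrite neq_ltn pab_lt. Qed.
Definition pr q : pair4 := exist _ (ps q) (ps_card q).

Lemma mem_ps i q : i < 4 -> (o4 i \in ps q) = memN i q.
Proof. by move=> hi; rewrite in_set2 !o4_eq ?pa_lt ?pb_lt. Qed.

Lemma ps_eq q q' : q < 6 -> q' < 6 -> (ps q == ps q') = (q == q').
Proof.
move=> hq hq'; apply/eqP/eqP => [H|->] //.
have h1 : memN (pa q) q' by rewrite -mem_ps ?pa_lt // -H in_set2 eqxx.
have h2 : memN (pb q) q' by rewrite -mem_ps ?pb_lt // -H in_set2 eqxx orbT.
have h3 : memN (pa q') q by rewrite -mem_ps ?pa_lt // H in_set2 eqxx.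
have h4 : memN (pb q') q by rewrite -mem_ps ?pb_lt // H in_set2 eqxx orbT.
clear H; move: hq hq' h1 h2 h3 h4.
by case: q => [|[|[|[|[|[|q]]]]]] //; case: q' => [|[|[|[|[|[|q']]]]]].
Qed.

Lemma pr_eq q q' : q < 6 -> q' < 6 -> (pr q == pr q') = (q == q').
Proof. move=> hq hq'; rewrite -ps_eq //. Qed.

Lemma card_set2I (T : finType) (a b : T) (D : {set T}) : a != b ->
  #|[set a; b] :&: D| = (a \in D) + (b \in D).
Proof.
move=> ab.
have -> : #|[set a; b] :&: D| = #|[seq x <- [:: a; b] | x \in D]|.
  apply: eq_card => x; rewrite in_setI in_set2 mem_filter !inE.
  by rewrite andbC.
rewrite (card_uniqP _) ?filter_uniq //=; last by rewrite inE ab.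
by case: (a \in D); case: (b \in D).
Qed.

Lemma cap_ps q q' : #|ps q :&: ps q'| = capN q q'.
Proof.
rewrite card_set2I; last by rewrite o4_eq ?pa_lt ?pb_lt // neq_ltn pab_lt.
by rewrite !mem_ps ?pa_lt ?pb_lt.
Qed.

Definition vx (k : nat) : V :=
  if k < 4 then vE (o4 k) else if k < 10 then vEE (pr (k-4))
  else if k < 16 then vF (pr (k-10)) else vG (o4 (k-16)).

Lemma mem_pr i q : i < 4 -> (o4 i \in val (pr q)) = memN i q.
Proof. exact: mem_ps. Qed.
Lemma cap_pr q q' : #|val (pr q) :&: val (pr q')| = capN q q'.
Proof. exact: cap_ps. Qed.

Lemma vx_eq k l : k < 20 -> l < 20 -> (vx k == vx l) = (k == l).
Proof.
move=> hk hl; rewrite /vx.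
case: (boolP (k<4)) => h1; case: (boolP (k<10)) => h2; case: (boolP (k<16)) => h3;
case: (boolP (l<4)) => g1; case: (boolP (l<10)) => g2; case: (boolP (l<16)) => g3;
try (exfalso; lia).
all: rewrite /vE /vEE /vF /vG.
all: apply/eqP/eqP => H.
all: try (subst; done).
all: try lia.
all: try by case: H.
all: case: H => /eqP; (rewrite o4_eq || rewrite ps_eq); try lia; move/eqP; lia.
Qed.

Lemma offd_vx k l : k < 20 -> l < 20 -> offdiag (vx k) (vx l) = offdN k l.
Proof.
move=> hk hl; rewrite /vx /offdN.
case: (boolP (k<4)) => h1; case: (boolP (k<10)) => h2; case: (boolP (k<16)) => h3;
case: (boolP (l<4)) => g1; case: (boolP (l<10)) => g2; case: (boolP (l<16)) => g3;
try (exfalso; lia).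
all: rewrite /vE /vEE /vF /vG /offdiag.
all: rewrite ?cap_pr ?mem_pr ?o4_eq ?pr_eq //; try lia.
Qed.

Lemma wt_vx k l : k < 20 -> l < 20 -> wt (vx k) (vx l) = wtN k l.
Proof.
move=> hk hl; rewrite /wt /inter vx_eq // /wtN.
by case: eqP => // _; rewrite offd_vx.
Qed.

Lemma vx_inj k l : k < 20 -> l < 20 -> vx k = vx l -> k = l.
Proof. by move=> hk hl /eqP; rewrite vx_eq // => /eqP. Qed.

Lemma set2_pr (a b : 'I_4) : a != b -> exists2 q, q < 6 & [set a; b] = ps q.
Proof.
have E : forall i : 'I_4, i = o4 i by move=> i; rewrite /o4 inord_val.
rewrite (E a) (E b) o4_eq //.
case: a b => [a Ha] [b Hb] /=.
case: a Ha => [|[|[|[|a]]]] Ha //; case: b Hb => [|[|[|[|b]]]] Hb // _;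
first [ by exists 0 | by exists 1 | by exists 2 | by exists 3 | by exists 4 | by exists 5
      | by exists 0 => //; rewrite /ps setUC | by exists 1 => //; rewrite /ps setUC
      | by exists 2 => //; rewrite /ps setUC | by exists 3 => //; rewrite /ps setUC
      | by exists 4 => //; rewrite /ps setUC | by exists 5 => //; rewrite /ps setUC ].
Qed.

Lemma pair_surj (p : pair4) : exists2 q, q < 6 & p = pr q.
Proof.
case: p => s Hs; case/cards2P: (Hs) => a [b [ab Es]].
case: (set2_pr ab) => q hq Eq; exists q => //.
by apply: val_inj => /=; rewrite Es Eq.
Qed.

Lemma vx_surj (v : V) : exists2 k, k < 20 & v = vx k.
Proof.
have E : forall i : 'I_4, i = o4 i by move=> i; rewrite /o4 inord_val.
case: v => [[[i|p]|p]|i].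
- exists (nat_of_ord i); first by have := ltn_ord i; lia.
  by rewrite /vx ltn_ord -E.
- case: (pair_surj p) => q hq ->; exists (q + 4); first lia.
  rewrite /vx ifF; last lia. rewrite ifT; last lia. by rewrite addnK.
- case: (pair_surj p) => q hq ->; exists (q + 10); first lia.
  rewrite /vx ifF; last lia. rewrite ifF; last lia. rewrite ifT; last lia. by rewrite addnK.
- exists (nat_of_ord i + 16); first by have := ltn_ord i; lia.
  have := ltn_ord i => hi.
  rewrite /vx ifF; last lia. rewrite ifF; last lia. rewrite ifF; last lia. by rewrite addnK -E.
Qed.

Lemma vx_Eset k : k < 20 -> (vx k \in Eset) = (k < 10).
Proof.
move=> hk; rewrite /vx.
case: (boolP (k<4)) => h1; case: (boolP (k<10)) => h2; case: (boolP (k<16)) => h3;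
try (exfalso; lia); by rewrite inE.
Qed.
Lemma vx_Fset k : k < 20 -> (vx k \in Fset) = (10 <= k < 16).
Proof.
move=> hk; rewrite /vx.
case: (boolP (k<4)) => h1; case: (boolP (k<10)) => h2; case: (boolP (k<16)) => h3;
try (exfalso; lia); rewrite inE /=; lia.
Qed.
Lemma vx_Gset k : k < 20 -> (vx k \in Gset) = (16 <= k).
Proof.
move=> hk; rewrite /vx.
case: (boolP (k<4)) => h1; case: (boolP (k<10)) => h2; case: (boolP (k<16)) => h3;
try (exfalso; lia); rewrite inE /=; lia.
Qed.

Definition okext t (s : seq nat) m y :=
  (y \notin s) && all (fun i => (wtN (nth 0 s i) y == aff_wt t i m) && (wtN y (nth 0 s i) == aff_wt t m i)) (iota 0 m).
Fixpoint embsN t m : seq (seq nat) :=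
  match m with 0 => [:: [::]]
  | m'.+1 => flatten [seq [seq rcons s y | y <- [seq y <- iota 0 20 | okext t s m' y]] | s <- embsN t m']
  end.

Definition embP t m s := [/\ size s = m, uniq s, all (fun x => x < 20) s &
   forall i j, i < m -> j < m -> i != j -> wtN (nth 0 s i) (nth 0 s j) = aff_wt t i j].

Lemma embsN_spec t m s : s \in embsN t m <-> embP t m s.
Proof.
elim: m s => [|m IH] s.
  rewrite /= inE; split => [/eqP -> | [/size0nil -> _ _ _]] //.
split.
- case/flatten_mapP => s' /IH [sz u a w] /mapP [y]; rewrite mem_filter => /andP [ok yin] ->.
  case/andP: ok => ys /allP al.
  split; first by rewrite size_rcons sz.
  + by rewrite rcons_uniq ys u.
  + by rewrite all_rcons a andbT; move: yin; rewrite mem_iota.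
  move=> i j hi hj ij; rewrite !nth_rcons sz.
  have [hi'|hi'] := ltnP i m; have [hj'|hj'] := ltnP j m.
  + exact: w.
  + have ej : j = m by lia. subst j; rewrite eqxx.
    have : i \in iota 0 m by rewrite mem_iota; lia.
    by move/al => /andP [/eqP -> _].
  + have ei : i = m by lia. subst i; rewrite eqxx.
    have : j \in iota 0 m by rewrite mem_iota; lia.
    by move/al => /andP [_ /eqP ->].
  + exfalso; move: ij; have -> : i = j by lia. by rewrite eqxx.
- case=> sz u a w; move: sz u a w; case/lastP: s => [|s' y] //.
  rewrite size_rcons rcons_uniq all_rcons => -[sz] /andP [ys u] /andP [ay a] w.
  apply/flatten_mapP; exists s'.
    apply/IH; split => // i j hi hj ij.
    have := w i j (ltnW hi) (ltnW hj) ij.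
    by rewrite !nth_rcons sz hi hj.
  apply/mapP; exists y => //; rewrite mem_filter mem_iota /= ay andbT.
  rewrite /okext ys /=; apply/allP => i; rewrite mem_iota add0n => /andP [_ hi].
  have ne1 : i != m by rewrite neq_ltn hi.
  have ne2 : m != i by rewrite neq_ltn hi orbT.
  have := w i m (ltnW hi) (ltnSn m) ne1.
  have := w m i (ltnSn m) (ltnW hi) ne2.
  rewrite !nth_rcons sz hi ltnn eqxx => -> ->.
  by rewrite !eqxx.
Qed.

Definition cn (s : seq nat) := [seq k <- iota 0 20 | k \in s].
Definition dec (l : seq nat) : {set V} := [set x in map vx l].
Definition affN t := undup [seq cn s | s <- embsN t (aff_size t)].
Definition tOf (c : nat * nat) :=
  match c.1 with 0 => tA c.2 | 1 => tD c.2 | _ => tE c.2 end.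
Definition codesT : seq (nat * nat) :=
  [seq (0,n) | n <- iota 1 20] ++ [seq (1,n) | n <- iota 4 17] ++ [:: (2,6); (2,7); (2,8)].
Definition AffN := undup (flatten [seq affN (tOf c) | c <- codesT]).
Definition diagOK :=
  all (fun c => all (fun i => aff_wt (tOf c) i i == 0) (iota 0 (aff_size (tOf c)))) codesT.
Lemma diagOK_true : diagOK. Proof. by vm_compute. Qed.

Definition lt20 (l : seq nat) := all (fun x => x < 20) l.

Lemma mem_cn k s : (k \in cn s) = (k < 20) && (k \in s).
Proof. by rewrite mem_filter mem_iota andbC. Qed.

Lemma cn_lt20 s : lt20 (cn s).
Proof. by apply/allP => k; rewrite mem_cn => /andP []. Qed.
Lemma cn_uniq s : uniq (cn s).
Proof. by rewrite filter_uniq // iota_uniq. Qed.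

Lemma dec_cn s : lt20 s -> dec (cn s) = dec s.
Proof.
move=> /allP a; apply/setP => x; rewrite !inE.
apply/mapP/mapP => -[k hk ->]; exists k => //; move: hk; rewrite mem_cn.
  by case/andP. by move=> hk; rewrite hk a.
Qed.

Lemma vx_in_dec k l : k < 20 -> lt20 l -> (vx k \in dec l) = (k \in l).
Proof.
move=> hk /allP a; rewrite inE; apply/mapP/idP => [[j hj /vx_inj E]|hk']; last by exists k.
by rewrite E // a.
Qed.

Lemma vx_surjb (v : V) : exists k, (k < 20) && (v == vx k).
Proof. by case: (vx_surj v) => k hk ->; exists k; rewrite hk eqxx. Qed.
Definition cd (v : V) : nat := xchoose (vx_surjb v).
Lemma cd_lt v : cd v < 20.
Proof. by case/andP: (xchooseP (vx_surjb v)). Qed.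
Lemma cdK v : vx (cd v) = v.
Proof. by case/andP: (xchooseP (vx_surjb v)) => _ /eqP <-. Qed.

Lemma cot_affN c C : c \in codesT ->
  comp_of_type C (tOf c) <-> exists2 l, l \in affN (tOf c) & C = dec l.
Proof.
move=> hc; set t := tOf c; set k := aff_size t.
split.
- case/existsP => f /and3P [/injectiveP finj /eqP EC /forallP W].
  pose s := map (fun a => cd (f a)) (enum 'I_k).
  have nthE : forall i (hi : i < k), nth 0 s i = cd (f (Ordinal hi)).
    move=> i hi; rewrite /s (nth_map (Ordinal hi)) ?size_enum_ord //.
    by rewrite (nth_ord_enum (Ordinal hi) (Ordinal hi)).
  have sP : embP t k s.
    split; first by rewrite size_map size_enum_ord.
    + rewrite map_inj_uniq ?enum_uniq // => a b E.
      by apply: finj; rewrite -(cdK (f a)) E cdK.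
    + by apply/allP => x /mapP [a _ ->]; apply: cd_lt.
    move=> i j hi hj ij.
    rewrite (nthE i hi) (nthE j hj).
    rewrite -wt_vx ?cd_lt // !cdK.
    by have /forallP /(_ (Ordinal hj)) /eqP := W (Ordinal hi).
  have hs : s \in embsN t k by apply/embsN_spec.
  exists (cn s); first by rewrite mem_undup; apply: map_f.
  rewrite dec_cn; last by case: sP.
  apply/setP => x; rewrite EC inE; apply/imsetP/mapP => [[a _ ->]|[y /mapP [a _ ->] ->]].
    by exists (cd (f a)); rewrite ?cdK //; apply: map_f; rewrite mem_enum.
  by exists a; rewrite ?cdK.
- case=> l; rewrite mem_undup => /mapP [s hs ->] ->.
  have [sz u a w] := (embsN_spec t k s).1 hs.
  have nlt : forall i, i < k -> nth 0 s i < 20.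
    by move=> i hi; apply: (allP a); rewrite mem_nth // sz.
  apply/existsP; exists [ffun i : 'I_k => vx (nth 0 s i)].
  apply/and3P; split.
  + apply/injectiveP => i j; rewrite !ffunE => /vx_inj.
    move=> /(_ (nlt _ (ltn_ord i)) (nlt _ (ltn_ord j))) /eqP.
    by rewrite nth_uniq ?sz // => /eqP /val_inj.
  + apply/eqP/setP => x; rewrite dec_cn // inE.
    apply/mapP/imsetP => [[y /(nthP 0) [i hi <-] ->]|[i _ ->]].
      by rewrite sz in hi; exists (Ordinal hi) => //; rewrite ffunE.
    by rewrite ffunE; exists (nth 0 s i) => //; rewrite mem_nth // sz.
  + apply/forallP => i; apply/forallP => j; rewrite !ffunE.
    case: (eqVneq i j) => [<-|ij].
      rewrite /wt eqxx.
      have := allP diagOK_true c hc => /allP /(_ i).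
      by rewrite mem_iota /= => /(_ (ltn_ord i)) /eqP ->.
    rewrite wt_vx ?nlt // w //.
Qed.

Lemma mem_AffN l : l \in AffN <-> exists2 c, c \in codesT & l \in affN (tOf c).
Proof.
rewrite mem_undup; split; first by case/flatten_mapP => c hc hl; exists c.
by case=> c hc hl; apply/flatten_mapP; exists c.
Qed.

Lemma is_affineE C : is_affine C <-> exists2 l, l \in AffN & C = dec l.
Proof.
split.
- case/existsP => n.
  have hn := ltn_ord n.
  case/or3P => /andP [v H].
  + have hc : (0, nat_of_ord n) \in codesT.
      rewrite /codesT !mem_cat; apply/orP; left; apply/mapP; exists (nat_of_ord n) => //.
      by rewrite mem_iota; move: v => /=; lia.
    have [l hl ->] := (cot_affN C hc).1 H.
    exists l; last by []. by apply/mem_AffN; exists (0, nat_of_ord n).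
  + have hc : (1, nat_of_ord n) \in codesT.
      rewrite /codesT !mem_cat; apply/orP; right; apply/orP; left; apply/mapP; exists (nat_of_ord n) => //.
      by rewrite mem_iota; move: v => /=; lia.
    have [l hl ->] := (cot_affN C hc).1 H.
    exists l; last by []. by apply/mem_AffN; exists (1, nat_of_ord n).
  + have hc : (2, nat_of_ord n) \in codesT.
      rewrite /codesT !mem_cat; apply/orP; right; apply/orP; right.
      move: v => /= /andP [v1 v2].
      by rewrite !inE; move: v1 v2; case: (nat_of_ord n) => [|[|[|[|[|[|[|[|[|m]]]]]]]]].
    have [l hl ->] := (cot_affN C hc).1 H.
    exists l; last by []. by apply/mem_AffN; exists (2, nat_of_ord n).
- case=> l /mem_AffN [c hc hl] ->.
  have H : comp_of_type (dec l) (tOf c) by apply/(cot_affN _ hc); exists l.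
  move: hc H; rewrite /codesT !mem_cat => /or3P [/mapP [n hn ->]|/mapP [n hn ->]|hc] H.
  + have hn' : n < 21 by move: hn; rewrite mem_iota; lia.
    apply/existsP; exists (Ordinal hn'); apply/or3P; apply: Or31; apply/andP; split; last exact: H.
    by move: hn; rewrite mem_iota /aff_valid /=; lia.
  + have hn' : n < 21 by move: hn; rewrite mem_iota; lia.
    apply/existsP; exists (Ordinal hn'); apply/or3P; apply: Or32; apply/andP; split; last exact: H.
    by move: hn; rewrite mem_iota /aff_valid /=; lia.
  + clear hl; case: c hc H => a b hc H.
    have [ea hb] : a = 2 /\ 5 < b <= 8.
      by move: hc; rewrite !inE !xpair_eqE => /or3P [] /andP [/eqP -> /eqP ->].
    have hn' : b < 21 by lia.
    apply/existsP; exists (Ordinal hn'); apply/or3P; apply: Or33; apply/andP; split.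
      by rewrite /aff_valid /=.
    by move: H; rewrite ea.
Qed.

Definition wtNsym := all (fun k => all (fun l => wtN k l == wtN l k) (iota 0 20)) (iota 0 20).
Lemma wtNsym_true : wtNsym. Proof. by vm_compute. Qed.

Lemma wtN_sym k l : k < 20 -> l < 20 -> wtN k l = wtN l k.
Proof.
move=> hk hl; have /allP H := wtNsym_true.
have hk' : k \in iota 0 20 by rewrite mem_iota.
have hl' : l \in iota 0 20 by rewrite mem_iota.
have /allP H2 := H k hk'.
exact/eqP/(H2 l hl').
Qed.

Lemma wt_sym u v : wt u v = wt v u.
Proof. by rewrite -(cdK u) -(cdK v) !wt_vx ?cd_lt // wtN_sym ?cd_lt. Qed.

Lemma adj_sym S : symmetric (adj S).
Proof. by move=> x y; rewrite /adj wt_sym andbCA. Qed.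

Lemma csym S : connect_sym (adj S).
Proof. exact: sym_connect_sym (adj_sym S). Qed.

Definition K (S : {set V}) (u : V) : {set V} := [set v in S | connect (adj S) u v].

Lemma K_eq (S : {set V}) u v : v \in K S u -> K S v = K S u.
Proof.
rewrite inE => /andP [vS cuv]; apply/setP => x; rewrite !inE.
case: (x \in S) => //=; apply/idP/idP => h.
  exact: connect_trans cuv h.
by apply: connect_trans h; rewrite csym.
Qed.

Lemma K_self (S : {set V}) u : u \in S -> u \in K S u.
Proof. by move=> uS; rewrite inE uS connect0. Qed.

Lemma K_sub (S : {set V}) u x : x \in K S u -> x \in S.
Proof. by rewrite inE => /andP []. Qed.

Lemma K_edge (S : {set V}) u x y : x \in K S u -> y \in S -> wt x y != 0 -> y \in K S u.
Proof.
rewrite !inE => /andP [xS cux] yS nz; rewrite yS /=.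
by apply: connect_trans cux _; apply: connect1; rewrite /adj xS yS nz.
Qed.

Lemma comps_K (S : {set V}) C : C \in comps S -> exists2 u, u \in S & C = K S u.
Proof. by case/imsetP => u uS ->; exists u. Qed.

Lemma K_comps (S : {set V}) u : u \in S -> K S u \in comps S.
Proof. by move=> uS; apply/imsetP; exists u. Qed.

Lemma comps_compat (S : {set V}) C D x y : C \in comps S -> D \in comps S -> C != D ->
  x \in C -> y \in D -> (x != y) && (wt x y == 0).
Proof.
case/comps_K => u uS ->; case/comps_K => w wS -> neq hx hy.
apply/andP; split.
  apply/eqP => exy; subst y.
  by move: neq; rewrite -(K_eq hx) -(K_eq hy) eqxx.
case: (eqVneq (wt x y) 0) => // nz.
have := K_edge hx (K_sub hy) nz => hy'.
by move: neq; rewrite -(K_eq hy') -(K_eq hy) eqxx.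
Qed.

Lemma comps_decomp (S : {set V}) (G : seq {set V}) :
  (forall x, (x \in S) = has (fun C : {set V} => x \in C) G) ->
  {in G &, forall (C D : {set V}) (x y : V), C != D -> x \in C -> y \in D -> wt x y = 0} ->
  {in G, forall C : {set V}, exists x, x \in C} ->
  {in G, forall (C : {set V}) (u v : V), u \in C -> v \in C -> connect (adj C) u v} ->
  comps S = [set C in G].
Proof.
move=> HS Hne Hnz Hc.
have KC : forall C u, C \in G -> u \in C -> K S u = C.
  move=> C u CG uC.
  have CS : forall x, x \in C -> x \in S by move=> x xC; rewrite HS; apply/hasP; exists C.
  have clos : forall x y, x \in C -> adj S x y -> y \in C.
    move=> x y xC /and3P [_ yS nz].
    move: yS; rewrite HS => /hasP [D DG yD].
    case: (eqVneq C D) => [-> //|neq].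
    by move: nz; rewrite (Hne C D CG DG x y neq xC yD) eqxx.
  apply/setP => v; rewrite inE; apply/idP/idP.
    case/andP => _ /connectP [p pth ->].
    elim: p u uC pth => [|z p IH] x xC //= /andP [axz pth].
    exact: IH (clos x z xC axz) pth.
  move=> vC; rewrite (CS v vC) /=.
  apply: (connect_sub _ (Hc C CG u v uC vC)) => x y /and3P [xC yC nz].
  by apply: connect1; rewrite /adj (CS x xC) (CS y yC) nz.
apply/setP => C; rewrite inE; apply/idP/idP.
  case/comps_K => u uS ->.
  by move: (uS); rewrite HS => /hasP [D DG uD]; rewrite (KC D u DG uD).
move=> CG; case: (Hnz C CG) => x xC.
rewrite -(KC C x CG xC); apply: K_comps.
by rewrite HS; apply/hasP; exists C.
Qed.

Fixpoint famsG (T : Type) (r : T -> T -> bool) (l acc : seq T) : seq (seq T) :=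
  match l with [::] => [:: acc]
  | x :: l' => famsG r l' acc ++ (if all (r x) acc then famsG r l' (x :: acc) else [::]) end.

Lemma famsP (T : eqType) (r : rel T) l : forall acc s, subseq s l -> uniq s ->
  {in s &, forall x y, x != y -> r x y} -> {in s, forall x, all (r x) acc} ->
  rev s ++ acc \in famsG r l acc.
Proof.
elim: l => [|x l IH] acc s /=.
  by move=> /eqP -> _ _ _; rewrite inE.
case: s => [|y s] Hsub.
  by move=> _ _ _; rewrite mem_cat (IH acc [::]) ?sub0seq.
case: eqP Hsub => [<- Hsub|nyx Hsub] /= /andP [ys us] Hp Ha.
  have ax : all (r y) acc by apply: Ha; rewrite mem_head.
  rewrite mem_cat ax; apply/orP; right.
  rewrite rev_cons cat_rcons; apply: IH => //.
    by move=> a b ha hb; apply: Hp; rewrite inE ?ha ?hb orbT.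
  move=> a ha /=; rewrite (Ha a) ?inE ?ha ?orbT // andbT.
  apply: Hp; rewrite ?inE ?ha ?eqxx ?orbT //.
  by apply/eqP => E; move: ys; rewrite -E ha.
rewrite mem_cat; apply/orP; left.
by apply: IH => //=; rewrite ys.
Qed.

Definition compatN (l1 l2 : seq nat) := all (fun a => all (fun b => (a != b) && (wtN a b == 0)) l2) l1.
Definition stepN (l R : seq nat) := [seq k <- l | (k \in R) || has (fun j => wtN j k != 0) R].
Definition reachN l n := iter n (stepN l) [:: head 0 l].
Definition connN l := all (fun k => k \in reachN l 20) l.


Lemma dec_inj l1 l2 : cn l1 = l1 -> cn l2 = l2 -> dec l1 = dec l2 -> l1 = l2.
Proof.
move=> E1 E2 D.
have a1 : lt20 l1 by rewrite -E1 cn_lt20.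
have a2 : lt20 l2 by rewrite -E2 cn_lt20.
rewrite -E1 -E2 /cn; apply: eq_in_filter => k; rewrite mem_iota /= => hk.
by rewrite -!vx_in_dec // D.
Qed.

Lemma in_dec x l : (x \in dec l) = (x \in map vx l).
Proof. by rewrite inE. Qed.

Lemma dec_flatten x F : (x \in dec (flatten F)) = has (fun l => x \in dec l) F.
Proof.
elim: F => [|l F IH] /=; first by rewrite in_dec.
by rewrite -IH !in_dec map_cat mem_cat.
Qed.

Lemma conn_dec l : lt20 l -> connN l ->
  forall u v, u \in dec l -> v \in dec l -> connect (adj (dec l)) u v.
Proof.
rewrite /connN => /allP a /allP cl u v hu hv.
have hl : head 0 l \in l.
  by move: hu; rewrite in_dec; case: l {a cl hv} => [|x t] //= _; rewrite mem_head.
set h := head 0 l.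
have inv : forall n k, k \in reachN l n -> (k \in l) && connect (adj (dec l)) (vx h) (vx k).
  elim => [|n IH] k.
    by rewrite /reachN /= inE => /eqP ->; rewrite hl connect0.
  rewrite /reachN iterS -/(reachN l n) mem_filter => /andP [/orP [kR|/hasP [j jR nz]] kl].
    exact: IH.
  rewrite kl /=; case/andP: (IH j jR) => jl cj.
  apply: connect_trans cj _; apply: connect1.
  have hj : j < 20 by apply: a.
  have hk : k < 20 by apply: a.
  by rewrite /adj !vx_in_dec //; [rewrite jl kl wt_vx | apply/allP | apply/allP].
move: hu hv; rewrite !in_dec => /mapP [a1 ha1 ->] /mapP [b1 hb1 ->].
case/andP: (inv 20 a1 (cl a1 ha1)) => _ c1.
case/andP: (inv 20 b1 (cl b1 hb1)) => _ c2.
by apply: connect_trans c2; rewrite csym.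
Qed.

Definition PrA (A : seq (seq nat)) (S : {set V}) (F : seq (seq nat)) :=
  [/\ comps S = [set C in map dec F], S = dec (flatten F), uniq (map dec F)
    & all (fun l => l \in A) F].

Lemma fwd_gen (A : seq (seq nat)) S : uniq A -> (forall l, l \in A -> cn l = l) ->
  (forall C, is_affine C -> exists2 l, l \in A & C = dec l) ->
  parabolic S -> exists2 F, F \in famsG compatN A [::] & PrA A S F.
Proof.
move=> uA cA iA /forallP pS.
have Alt : forall l, l \in A -> lt20 l by move=> l /cA <-; apply: cn_lt20.
have hAff : forall C, C \in comps S -> exists2 l, l \in A & C = dec l.
  move=> C hC; apply: iA; have := pS C; rewrite hC; exact.
pose s := [seq l <- A | dec l \in comps S].
have sA : forall l, l \in s -> l \in A by move=> l; rewrite mem_filter => /andP [_ h]; exact: h.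
have sC : forall l, l \in s -> dec l \in comps S by move=> l; rewrite mem_filter => /andP [h _]; exact: h.
have us : uniq s by apply: filter_uniq.
have Hp : {in s &, forall x y, x != y -> compatN x y}.
  move=> l1 l2 h1 h2 ne.
  have dne : dec l1 != dec l2.
    apply: contra ne => /eqP E; apply/eqP; apply: dec_inj E; apply: cA; apply: sA; assumption.
  apply/allP => a ha; apply/allP => b hb.
  have a20 : a < 20 by apply: (allP (Alt _ (sA _ h1))).
  have b20 : b < 20 by apply: (allP (Alt _ (sA _ h2))).
  have := comps_compat (sC _ h1) (sC _ h2) dne (x := vx a) (y := vx b).
  rewrite !vx_in_dec; [|exact: b20|exact: Alt _ (sA _ h2)|exact: a20|exact: Alt _ (sA _ h1)].
  move=> /(_ ha hb) /andP [ne' /eqP w0].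
  rewrite -wt_vx // w0 eqxx andbT.
  by apply: contra ne' => /eqP ->.
have hF : rev s ++ [::] \in famsG compatN A [::].
  apply: famsP; [exact: filter_subseq | exact: us | exact: Hp | by move=> x _].
rewrite cats0 in hF; exists (rev s); first exact: hF.
split.
- apply/setP => C; rewrite inE map_rev mem_rev; apply/idP/mapP.
    move=> hC; case: (hAff C hC) => l hl EC; exists l; last exact: EC.
    rewrite mem_filter hl andbT -EC; exact: hC.
  by case=> l hl ->; apply: sC.
- apply/setP => x; rewrite dec_flatten has_rev; apply/idP/hasP.
    move=> xS; have KC := K_comps xS.
    case: (hAff _ KC) => l hl EK; exists l.
      rewrite mem_filter hl andbT -EK; exact: KC.
    by rewrite -EK; apply: K_self.
  case=> l /sC hl hx; case/comps_K: hl => u uS EK.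
  by move: hx; rewrite EK; apply: K_sub.
- rewrite map_rev rev_uniq map_inj_in_uniq; first exact: us.
  by move=> l1 l2 h1 h2; apply: dec_inj; apply: cA; apply: sA.
- by apply/allP => l; rewrite mem_rev; apply: sA.
Qed.

Definition famOKg (A : seq (seq nat)) (F : seq (seq nat)) :=
  [&& all (fun l => l \in A) F, uniq F, all (fun l => l != [::]) F,
      all (fun l1 => all (fun l2 => (l1 == l2) || compatN l1 l2) F) F & all connN F].

Lemma bwd_gen (A : seq (seq nat)) F : (forall l, l \in A -> cn l = l) ->
  (forall l, l \in A -> is_affine (dec l)) -> famOKg A F ->
  parabolic (dec (flatten F)) /\ PrA A (dec (flatten F)) F.
Proof.
move=> cA iA /and5P [/allP FA uF /allP Fne /allP Fc /allP Fconn].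
have Alt : forall l, l \in A -> lt20 l by move=> l /cA <-; apply: cn_lt20.
have Ecomps : comps (dec (flatten F)) = [set C in map dec F].
  apply: comps_decomp.
  - by move=> x; rewrite dec_flatten has_map.
  - move=> C D /mapP [l1 h1 ->] /mapP [l2 h2 ->] x y ne hx hy.
    have ne' : l1 != l2 by apply: contra ne => /eqP ->.
    have := allP (Fc l1 h1) l2 h2; rewrite (negbTE ne') /= => cp.
    move: hx hy; rewrite !in_dec => /mapP [a ha ->] /mapP [b hb ->].
    have a20 : a < 20 by apply: (allP (Alt _ (FA _ h1))).
    have b20 : b < 20 by apply: (allP (Alt _ (FA _ h2))).
    rewrite wt_vx //.
    by have /andP [_ /eqP] := allP (allP cp a ha) b hb.
  - move=> C /mapP [l hl ->]; move: (Fne l hl); case: l hl => // a t _ _.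
    by exists (vx a); rewrite in_dec mem_head.
  - move=> C /mapP [l hl ->]; apply: conn_dec; last exact: Fconn.
    exact: Alt _ (FA _ hl).
split.
  apply/forallP => C; apply/implyP; rewrite Ecomps inE => /mapP [l hl ->].
  by apply: iA; apply: FA.
split => //; last by apply/allP.
rewrite map_inj_in_uniq; first exact: uF.
by move=> l1 l2 h1 h2; apply: dec_inj; apply: cA; exact: FA.
Qed.

Definition AffL : seq (seq nat) := [:: [:: 4; 10]; [:: 5; 11]; [:: 6; 12]; [:: 7; 13]; [:: 12; 13]; [:: 8; 14]; [:: 11; 14]; [:: 9; 15]; [:: 10; 15]; [:: 0; 16]; [:: 13; 16]; [:: 14; 16]; [:: 15; 16]; [:: 1; 17]; [:: 11; 17]; [:: 12; 17]; [:: 15; 17]; [:: 16; 17]; [:: 2; 18]; [:: 10; 18]; [:: 12; 18]; [:: 14; 18]; [:: 16; 18]; [:: 17; 18]; [:: 3; 19]; [:: 10; 19]; [:: 11; 19]; [:: 13; 19]; [:: 16; 19]; [:: 17; 19]; [:: 18; 19]; [:: 10; 11; 12]; [:: 10; 11; 13]; [:: 10; 12; 14]; [:: 10; 13; 14]; [:: 11; 12; 15]; [:: 11; 13; 15]; [:: 12; 14; 15]; [:: 13; 14; 15]; [:: 0; 1; 2; 4; 5; 7]; [:: 0; 1; 3; 4; 6; 8]; [:: 0; 2; 3; 5; 6; 9]; [:: 1; 2; 3; 7; 8; 9]; [:: 0; 1; 2; 3; 5; 6; 7; 8]; [:: 0; 1; 2; 3; 4; 6; 7; 9]; [:: 0;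 1; 2; 3; 4; 5; 8; 9]; [:: 2; 3; 5; 6; 7; 8; 9]; [:: 0; 1; 4; 5; 6; 7; 8]; [:: 1; 2; 4; 5; 7; 8; 9]; [:: 1; 3; 4; 6; 7; 8; 9]; [:: 0; 2; 4; 5; 6; 7; 9]; [:: 0; 3; 4; 5; 6; 8; 9]; [:: 0; 1; 2; 3; 4; 5; 6]; [:: 0; 1; 2; 3; 4; 7; 8]; [:: 0; 1; 2; 3; 5; 7; 9]; [:: 0; 1; 2; 3; 6; 8; 9]; [:: 0; 1; 2; 4; 5; 6; 8; 9]; [:: 0; 2; 3; 4; 5; 6; 7; 8]; [:: 0; 1; 3; 4; 5; 6; 7; 9]; [:: 0; 1; 2; 4; 6; 7; 8; 9]; [:: 1; 2; 3; 4; 5; 6; 7; 8]; [:: 0; 1; 3; 4; 5; 7; 8; 9]; [:: 0; 1; 2; 5; 6; 7; 8; 9]; [:: 1; 2; 3; 4; 5; 6; 7; 9]; [:: 0; 2; 3; 4; 5; 7; 8; 9]; [:: 0; 1; 3; 5; 6; 7; 8; 9]; [:: 1; 2; 3; 4; 5; 6; 8; 9]; [:: 0; 2; 3; 4; 6; 7; 8; 9]].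
Lemma AffN_AffL : AffN = AffL. Proof. by vm_compute. Qed.
Lemma AffL_cn_all : all (fun l => cn l == l) AffL. Proof. by vm_compute. Qed.
Lemma AffL_uniq : uniq AffL. Proof. by vm_compute. Qed.
Lemma AffL_cn l : l \in AffL -> cn l = l.
Proof. by move=> hl; apply/eqP; apply: (allP AffL_cn_all l hl). Qed.

Definition FAM : seq (seq (seq nat)) := [:: [::]; [:: [:: 0; 2; 3; 4; 6; 7; 8; 9]]; [:: [:: 1; 2; 3; 4; 5; 6; 8; 9]]; [:: [:: 0; 1; 3; 5; 6; 7; 8; 9]]; [:: [:: 0; 2; 3; 4; 5; 7; 8; 9]]; [:: [:: 1; 2; 3; 4; 5; 6; 7; 9]]; [:: [:: 0; 1; 2; 5; 6; 7; 8; 9]]; [:: [:: 0; 1; 3; 4; 5; 7; 8; 9]]; [:: [:: 1; 2; 3; 4; 5; 6; 7; 8]]; [:: [:: 0; 1; 2; 4; 6; 7; 8; 9]]; [:: [:: 0; 1; 3; 4; 5; 6; 7; 9]]; [:: [:: 0; 2; 3; 4; 5; 6; 7; 8]]; [:: [:: 0; 1; 2; 4; 5; 6; 8; 9]]; [:: [:: 0; 1; 2; 3; 6; 8; 9]]; [:: [:: 0; 1; 2; 3; 5; 7; 9]]; [:: [:: 0; 1; 2; 3; 4; 7; 8]]; [:: [:: 0; 1; 2; 3; 4; 5; 6]]; [:: [:: 0; 3; 4; 5; 6; 8; 9]]; [:: [:: 0; 2; 4; 5; 6; 7; 9]]; [:: [:: 1; 3; 4; 6; 7; 8; 9]]; [::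 [:: 1; 2; 4; 5; 7; 8; 9]]; [:: [:: 0; 1; 4; 5; 6; 7; 8]]; [:: [:: 2; 3; 5; 6; 7; 8; 9]]; [:: [:: 0; 1; 2; 3; 4; 5; 8; 9]]; [:: [:: 0; 1; 2; 3; 4; 6; 7; 9]]; [:: [:: 0; 1; 2; 3; 5; 6; 7; 8]]; [:: [:: 1; 2; 3; 7; 8; 9]]; [:: [:: 0; 2; 3; 5; 6; 9]]; [:: [:: 0; 1; 3; 4; 6; 8]]; [:: [:: 0; 1; 2; 4; 5; 7]]; [:: [:: 13; 14; 15]]; [:: [:: 0; 1; 2; 3; 4; 5; 6]; [:: 13; 14; 15]]; [:: [:: 12; 14; 15]]; [:: [:: 0; 1; 2; 4; 5; 7]; [:: 12; 14; 15]]; [:: [:: 11; 13; 15]]; [:: [:: 0; 1; 3; 4; 6; 8]; [:: 11; 13; 15]]; [:: [:: 11; 12; 15]]; [:: [:: 0; 1; 2; 3; 4; 7; 8]; [:: 11; 12; 15]]; [:: [:: 10; 13; 14]]; [:: [:: 0; 2; 3; 5; 6; 9]; [:: 10; 13; 14]]; [:: [:: 10; 12; 14]]; [:: [:: 0; 1; 2; 3; 5; 7; 9]; [:: 10; 12; 14]]; [:: [:: 10; 11; 13]]; [:: [:: 0; 1; 2; 3; 6; 8; 9]; [:: 10; 11; 13]]; [:: [:: 10; 11; 12]]; [:: [:: 1; 2; 3; 7; 8; 9]; [:: 10; 11; 12]]; [:: [:: 18; 19]]; [:: [:: 0; 1; 4; 5; 6; 7; 8]; [:: 18; 19]]; [::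 [:: 17; 19]]; [:: [:: 0; 2; 4; 5; 6; 7; 9]; [:: 17; 19]]; [:: [:: 16; 19]]; [:: [:: 1; 2; 4; 5; 7; 8; 9]; [:: 16; 19]]; [:: [:: 13; 19]]; [:: [:: 0; 1; 2; 4; 5; 6; 8; 9]; [:: 13; 19]]; [:: [:: 11; 19]]; [:: [:: 0; 1; 2; 4; 6; 7; 8; 9]; [:: 11; 19]]; [:: [:: 10; 19]]; [:: [:: 0; 1; 2; 5; 6; 7; 8; 9]; [:: 10; 19]]; [:: [:: 3; 19]]; [:: [:: 0; 1; 2; 4; 5; 7]; [:: 3; 19]]; [:: [:: 12; 14; 15]; [:: 3; 19]]; [:: [:: 0; 1; 2; 4; 5; 7]; [:: 12; 14; 15]; [:: 3; 19]]; [:: [:: 17; 18]]; [:: [:: 0; 3; 4; 5; 6; 8; 9]; [:: 17; 18]]; [:: [:: 16; 18]]; [:: [:: 1; 3; 4; 6; 7; 8; 9]; [:: 16; 18]]; [:: [:: 14; 18]]; [:: [:: 0; 1; 3; 4; 5; 6; 7; 9]; [:: 14; 18]]; [:: [:: 12; 18]]; [:: [:: 0; 1; 3; 4; 5; 7; 8; 9]; [:: 12; 18]]; [:: [:: 10; 18]]; [:: [:: 0; 1; 3; 5; 6; 7; 8; 9]; [:: 10; 18]]; [:: [:: 2; 18]]; [:: [:: 0; 1; 3; 4; 6; 8]; [:: 2; 18]]; [:: [:: 11; 13; 15]; [:: 2; 18]]; [:: [:: 0; 1; 3; 4; 6; 8]; [:: 11; 13; 15]; [:: 2; 18]]; [::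 [:: 16; 17]]; [:: [:: 2; 3; 5; 6; 7; 8; 9]; [:: 16; 17]]; [:: [:: 15; 17]]; [:: [:: 0; 2; 3; 4; 5; 6; 7; 8]; [:: 15; 17]]; [:: [:: 12; 17]]; [:: [:: 0; 2; 3; 4; 5; 7; 8; 9]; [:: 12; 17]]; [:: [:: 11; 17]]; [:: [:: 0; 2; 3; 4; 6; 7; 8; 9]; [:: 11; 17]]; [:: [:: 1; 17]]; [:: [:: 0; 2; 3; 5; 6; 9]; [:: 1; 17]]; [:: [:: 10; 13; 14]; [:: 1; 17]]; [:: [:: 0; 2; 3; 5; 6; 9]; [:: 10; 13; 14]; [:: 1; 17]]; [:: [:: 15; 16]]; [:: [:: 1; 2; 3; 4; 5; 6; 7; 8]; [:: 15; 16]]; [:: [:: 14; 16]]; [:: [:: 1; 2; 3; 4; 5; 6; 7; 9]; [:: 14; 16]]; [:: [:: 13; 16]]; [:: [:: 1; 2; 3; 4; 5; 6; 8; 9]; [:: 13; 16]]; [:: [:: 0; 16]]; [:: [:: 1; 2; 3; 7; 8; 9]; [:: 0; 16]]; [:: [:: 10; 11; 12]; [:: 0; 16]]; [:: [:: 1; 2; 3; 7; 8; 9]; [:: 10; 11; 12]; [:: 0; 16]]; [:: [:: 10; 15]]; [:: [:: 0; 1; 2; 3; 5; 6; 7; 8]; [:: 10; 15]]; [:: [:: 9; 15]]; [:: [:: 0; 1; 4; 5; 6; 7; 8]; [:: 9; 15]]; [:: [:: 18; 19]; [:: 9; 15]]; [:: [:: 0; 1; 4; 5; 6; 7; 8]; [::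 18; 19]; [:: 9; 15]]; [:: [:: 11; 14]]; [:: [:: 0; 1; 2; 3; 4; 6; 7; 9]; [:: 11; 14]]; [:: [:: 8; 14]]; [:: [:: 0; 2; 4; 5; 6; 7; 9]; [:: 8; 14]]; [:: [:: 17; 19]; [:: 8; 14]]; [:: [:: 0; 2; 4; 5; 6; 7; 9]; [:: 17; 19]; [:: 8; 14]]; [:: [:: 12; 13]]; [:: [:: 0; 1; 2; 3; 4; 5; 8; 9]; [:: 12; 13]]; [:: [:: 7; 13]]; [:: [:: 0; 3; 4; 5; 6; 8; 9]; [:: 7; 13]]; [:: [:: 17; 18]; [:: 7; 13]]; [:: [:: 0; 3; 4; 5; 6; 8; 9]; [:: 17; 18]; [:: 7; 13]]; [:: [:: 6; 12]]; [:: [:: 1; 2; 4; 5; 7; 8; 9]; [:: 6; 12]]; [:: [:: 16; 19]; [:: 6; 12]]; [:: [:: 1; 2; 4; 5; 7; 8; 9]; [:: 16; 19]; [:: 6; 12]]; [:: [:: 5; 11]]; [:: [:: 1; 3; 4; 6; 7; 8; 9]; [:: 5; 11]]; [:: [:: 16; 18]; [:: 5; 11]]; [:: [:: 1; 3; 4; 6; 7; 8; 9]; [:: 16; 18]; [:: 5; 11]]; [:: [:: 4; 10]]; [:: [:: 2; 3; 5; 6; 7; 8; 9]; [:: 4; 10]]; [:: [:: 16; 17]; [:: 4; 10]]; [:: [:: 2; 3; 5; 6; 7; 8; 9]; [:: 16; 17]; [:: 4; 10]]].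
Lemma FAM_eq : famsG compatN AffL [::] = FAM. Proof. by vm_compute. Qed.
Lemma FAM_OK_all : all (famOKg AffL) FAM. Proof. by vm_compute. Qed.

Lemma AffL_aff l : l \in AffL -> is_affine (dec l).
Proof. by move=> hl; apply/is_affineE; exists l; rewrite ?AffN_AffL. Qed.
Lemma aff_AffL C : is_affine C -> exists2 l, l \in AffL & C = dec l.
Proof. by rewrite -AffN_AffL; move/is_affineE. Qed.
Lemma affN_AffL c l : c \in codesT -> l \in affN (tOf c) -> l \in AffL.
Proof. by move=> hc hl; rewrite -AffN_AffL; apply/mem_AffN; exists c. Qed.

Definition Pr := PrA AffL.

Lemma fwd S : parabolic S -> exists2 F, F \in FAM & Pr S F.
Proof.
move=> pS; rewrite -FAM_eq.
exact: (fwd_gen AffL_uniq AffL_cn aff_AffL pS).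
Qed.

Lemma bwd F : F \in FAM -> parabolic (dec (flatten F)) /\ Pr (dec (flatten F)) F.
Proof.
move=> hF; apply: (bwd_gen AffL_cn AffL_aff).
exact: (allP FAM_OK_all F hF).
Qed.

Definition rkN (F : seq (seq nat)) := size (cn (flatten F)) - size F.

Lemma card_dec l : uniq l -> lt20 l -> #|dec l| = size l.
Proof.
move=> ul /allP a; rewrite /dec cardsE (card_uniqP _) ?size_map //.
rewrite map_inj_in_uniq // => x y hx hy; apply: vx_inj; [exact: a | exact: a].
Qed.

Lemma PrA_lt20 A S F : (forall l, l \in A -> cn l = l) -> PrA A S F -> lt20 (flatten F).
Proof.
move=> cA [_ _ _ /allP aF]; apply/allP => k /flattenP [l hl hk].
have : lt20 l by rewrite -(cA l (aF l hl)) cn_lt20.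
by move/allP; apply.
Qed.

Lemma ncomps_PrA A S F : PrA A S F -> #|comps S| = size F.
Proof. by case=> EC _ uF _; rewrite EC cardsE (card_uniqP _) ?size_map. Qed.

Lemma prank_PrA A S F : (forall l, l \in A -> cn l = l) -> PrA A S F -> prank S = rkN F.
Proof.
move=> cA HP; have l20 := PrA_lt20 cA HP.
rewrite /prank (ncomps_PrA HP); case: HP => _ ES _ _.
by rewrite ES -dec_cn // card_dec ?cn_uniq ?cn_lt20.
Qed.

Lemma ncomp_PrA A S F c : (forall l, l \in A -> cn l = l) ->
  (forall l, l \in affN (tOf c) -> l \in A) -> PrA A S F -> c \in codesT ->
  ncomp S (tOf c) = count (fun l => l \in affN (tOf c)) F.
Proof.
move=> cA hA [EC _ uF /allP aF] hc; rewrite /ncomp EC.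
have -> : [set C in [set C in map dec F] | comp_of_type C (tOf c)] =
          [set C in filter (fun C => comp_of_type C (tOf c)) (map dec F)].
  by apply/setP => C; rewrite !inE mem_filter andbC.
rewrite cardsE (card_uniqP _); last exact: filter_uniq.
rewrite size_filter count_map; apply: eq_in_count => l hl /=.
apply/idP/idP.
  case/(cot_affN _ hc) => l' hl' E.
  have -> : l = l' by apply: dec_inj E; [apply: cA; exact: aF | apply: cA; exact: hA].
  exact: hl'.
by move=> h; apply/(cot_affN _ hc); exists l.
Qed.

Lemma card_decI (B : {set V}) (P : pred nat) L : uniq L -> lt20 L ->
  (forall k, k < 20 -> (vx k \in B) = P k) -> #|dec L :&: B| = count P L.
Proof.
move=> uL aL HB.
have aF : lt20 (filter P L).
  apply/allP => k; rewrite mem_filter => /andP [_ h]; exact: (allP aL k h).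
have -> : dec L :&: B = dec (filter P L).
  apply/setP => x; rewrite -(cdK x) in_setI !vx_in_dec ?cd_lt //.
  by rewrite mem_filter HB ?cd_lt // andbC.
by rewrite card_dec ?filter_uniq // size_filter.
Qed.

Lemma cn_idem s : cn (cn s) = cn s.
Proof.
rewrite {1}/cn; apply: eq_in_filter => k; rewrite mem_iota /= => hk.
by rewrite mem_cn hk.
Qed.

Lemma Pr_lt20 S F : Pr S F -> lt20 (flatten F).
Proof. exact: PrA_lt20 AffL_cn. Qed.
Lemma prank_Pr S F : Pr S F -> prank S = rkN F.
Proof. exact: prank_PrA AffL_cn. Qed.
Lemma ncomps_Pr S F : Pr S F -> #|comps S| = size F.
Proof. exact: ncomps_PrA. Qed.
Lemma ncomp_Pr S F c : Pr S F -> c \in codesT ->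
  ncomp S (tOf c) = count (fun l => l \in affN (tOf c)) F.
Proof. move=> HP hc; exact: (ncomp_PrA AffL_cn (fun l => @affN_AffL c l hc) HP hc). Qed.


Section Gen.
Variable Fs : seq (seq (seq nat)).
Hypothesis fwdF : forall S, parabolic S -> exists2 F, F \in Fs & Pr S F.
Hypothesis bwdF : forall F, F \in Fs -> parabolic (dec (flatten F)) /\ Pr (dec (flatten F)) F.

Definition L8g (tyN : seq (seq nat) -> bool) :=
  [seq cn (flatten F) | F <- [seq F <- Fs | (rkN F == 8) && tyN F]].

Lemma set8g (ty : {set V} -> bool) tyN :
  (forall S F, F \in Fs -> Pr S F -> ty S = tyN F) ->
  [set S | [&& parabolic S, prank S == 8 & ty S]] = [set S in map dec (L8g tyN)].
Proof.
move=> tyE; apply/setP => S; rewrite !in_set; apply/idP/idP.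
  case/and3P => pS /eqP r8 tS; case: (fwdF pS) => F hF HP.
  apply/mapP; exists (cn (flatten F)).
    apply: map_f; rewrite mem_filter -(tyE S F hF HP) tS -(prank_Pr HP) r8 eqxx /=.
    exact: hF.
  by rewrite dec_cn; [case: HP | exact: Pr_lt20 HP].
case/mapP => L /mapP [F]; rewrite mem_filter => /andP [/andP [r8 tF] hF] -> ->.
case: (bwdF hF) => pS HP.
rewrite dec_cn; last exact: Pr_lt20 HP.
by rewrite pS (prank_Pr HP) r8 (tyE _ _ hF HP) tF.
Qed.

Lemma card8g tyN : uniq (L8g tyN) -> #|[set S in map dec (L8g tyN)]| = size (L8g tyN).
Proof.
move=> u; rewrite cardsE (card_uniqP _) ?size_map //.
rewrite map_inj_in_uniq; first exact: u.
move=> x y /mapP [F _ ->] /mapP [G _ ->].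
by apply: dec_inj; apply: cn_idem.
Qed.

Definition checkTg tyN c e f g :=
  [&& size (L8g tyN) == c, uniq (L8g tyN) &
      all (fun L => [&& count (fun k => k < 10) L == e,
                        count (fun k => 10 <= k < 16) L == f &
                        count (fun k => 16 <= k) L == g]) (L8g tyN)].

Lemma type_class_g (ty : {set V} -> bool) tyN c e f g :
  (forall S F, F \in Fs -> Pr S F -> ty S = tyN F) -> checkTg tyN c e f g ->
  type_class ty c e f g.
Proof.
move=> tyE /and3P [/eqP sz u /allP cnt]; split.
  by rewrite (set8g tyE) (card8g u) sz.
move=> S pS r8 tS.
have : S \in [set S | [&& parabolic S, prank S == 8 & ty S]] by rewrite in_set pS r8 eqxx tS.
rewrite (set8g tyE) in_set => /mapP [L hL ->].
have [uL aL] : uniq L /\ lt20 L by case/mapP: hL => F _ ->; split; [exact: cn_uniq | exact: cn_lt20].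
case/and3P: (cnt L hL) => /eqP e1 /eqP e2 /eqP e3.
split.
- rewrite (card_decI uL aL (P := fun k => k < 10)); first exact: e1.
  by move=> k hk; apply: vx_Eset.
- rewrite (card_decI uL aL (P := fun k => 10 <= k < 16)); first exact: e2.
  by move=> k hk; apply: vx_Fset.
- rewrite (card_decI uL aL (P := fun k => 16 <= k)); first exact: e3.
  by move=> k hk; apply: vx_Gset.
Qed.

Lemma count8g (tyN : seq (seq nat) -> bool) :
  (forall F, F \in Fs -> tyN F = true) -> uniq (L8g tyN) ->
  #|[set S : {set V} | parabolic S && (prank S == 8)]| = size (L8g tyN).
Proof.
move=> hT u.
have -> : [set S | parabolic S && (prank S == 8)] = [set S | [&& parabolic S, prank S == 8 & true]].
  by apply/setP => S; rewrite !in_set andbT.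
rewrite (@set8g (fun _ => true) tyN); first exact: card8g u.
by move=> S F hF _; rewrite hT.
Qed.
End Gen.

Definition TL : seq (seq (seq nat)) := [:: [:: [:: 0; 1; 2; 4; 5; 6; 8; 9]; [:: 0; 2; 3; 4; 5; 6; 7; 8]; [:: 0; 1; 3; 4; 5; 6; 7; 9]; [:: 0; 1; 2; 4; 6; 7; 8; 9]; [:: 1; 2; 3; 4; 5; 6; 7; 8]; [:: 0; 1; 3; 4; 5; 7; 8; 9]; [:: 0; 1; 2; 5; 6; 7; 8; 9]; [:: 1; 2; 3; 4; 5; 6; 7; 9]; [:: 0; 2; 3; 4; 5; 7; 8; 9]; [:: 0; 1; 3; 5; 6; 7; 8; 9]; [:: 1; 2; 3; 4; 5; 6; 8; 9]; [:: 0; 2; 3; 4; 6; 7; 8; 9]]; [:: [:: 0; 1; 2; 3; 4; 5; 6]; [:: 0; 1; 2; 3; 4; 7; 8]; [:: 0; 1; 2; 3; 5; 7; 9]; [:: 0; 1; 2; 3; 6; 8; 9]]; [:: [:: 2; 3; 5; 6; 7; 8; 9]; [:: 0; 1; 4; 5; 6; 7; 8]; [:: 1; 2; 4; 5; 7; 8; 9]; [:: 1; 3; 4; 6; 7; 8; 9]; [:: 0; 2; 4; 5; 6; 7; 9]; [:: 0; 3; 4; 5; 6; 8; 9]]; [:: [:: 4; 10]; [:: 5; 11]; [:: 6; 12]; [:: 7; 13]; [:: 12; 13]; [:: 8; 14]; [:: 11; 14]; [:: 9; 15]; [:: 10; 15]; [:: 0; 16]; [:: 13; 16]; [:: 14;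 16]; [:: 15; 16]; [:: 1; 17]; [:: 11; 17]; [:: 12; 17]; [:: 15; 17]; [:: 16; 17]; [:: 2; 18]; [:: 10; 18]; [:: 12; 18]; [:: 14; 18]; [:: 16; 18]; [:: 17; 18]; [:: 3; 19]; [:: 10; 19]; [:: 11; 19]; [:: 13; 19]; [:: 16; 19]; [:: 17; 19]; [:: 18; 19]]; [:: [:: 10; 11; 12]; [:: 10; 11; 13]; [:: 10; 12; 14]; [:: 10; 13; 14]; [:: 11; 12; 15]; [:: 11; 13; 15]; [:: 12; 14; 15]; [:: 13; 14; 15]]; [:: [:: 0; 1; 2; 4; 5; 7]; [:: 0; 1; 3; 4; 6; 8]; [:: 0; 2; 3; 5; 6; 9]; [:: 1; 2; 3; 7; 8; 9]]; [:: [:: 0; 1; 2; 3; 5; 6; 7; 8]; [:: 0; 1; 2; 3; 4; 6; 7; 9]; [:: 0; 1; 2; 3; 4; 5; 8; 9]]].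
Definition aE7L := nth [::] TL 0.
Lemma aE7E : affN (tOf (2,7)) = aE7L. Proof. by vm_compute. Qed.
Definition aE6L := nth [::] TL 1.
Lemma aE6E : affN (tOf (2,6)) = aE6L. Proof. by vm_compute. Qed.
Definition aD6L := nth [::] TL 2.
Lemma aD6E : affN (tOf (1,6)) = aD6L. Proof. by vm_compute. Qed.
Definition aA1L := nth [::] TL 3.
Lemma aA1E : affN (tOf (0,1)) = aA1L. Proof. by vm_compute. Qed.
Definition aA2L := nth [::] TL 4.
Lemma aA2E : affN (tOf (0,2)) = aA2L. Proof. by vm_compute. Qed.
Definition aA5L := nth [::] TL 5.
Lemma aA5E : affN (tOf (0,5)) = aA5L. Proof. by vm_compute. Qed.
Definition aA7L := nth [::] TL 6.
Lemma aA7E : affN (tOf (0,7)) = aA7L. Proof. by vm_compute. Qed.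
Definition cntA (a : seq (seq nat)) F := count (fun l => l \in a) F.
Definition tE7A1N F := [&& size F == 2, cntA aE7L F == 1 & cntA aA1L F == 1].
Definition tE6A2N F := [&& size F == 2, cntA aE6L F == 1 & cntA aA2L F == 1].
Definition tD6A1A1N F := [&& size F == 3, cntA aD6L F == 1 & cntA aA1L F == 2].
Definition tA7A1N F := [&& size F == 2, cntA aA7L F == 1 & cntA aA1L F == 1].
Definition tA5A2A1N F := [&& size F == 3, cntA aA5L F == 1, cntA aA2L F == 1 & cntA aA1L F == 1].

Lemma c27 : (2,7) \in codesT. Proof. by vm_compute. Qed.
Lemma c26 : (2,6) \in codesT. Proof. by vm_compute. Qed.
Lemma c16 : (1,6) \in codesT. Proof. by vm_compute. Qed.
Lemma c01 : (0,1) \in codesT. Proof. by vm_compute. Qed.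
Lemma c02 : (0,2) \in codesT. Proof. by vm_compute. Qed.
Lemma c05 : (0,5) \in codesT. Proof. by vm_compute. Qed.
Lemma c07 : (0,7) \in codesT. Proof. by vm_compute. Qed.

Lemma tyE1 S F : Pr S F -> type_E7A1 S = tE7A1N F.
Proof.
move=> HP; rewrite /type_E7A1 (ncomps_Pr HP) (ncomp_Pr HP c27) (ncomp_Pr HP c01).
by rewrite aE7E aA1E.
Qed.
Lemma tyE2 S F : Pr S F -> type_E6A2 S = tE6A2N F.
Proof.
move=> HP; rewrite /type_E6A2 (ncomps_Pr HP) (ncomp_Pr HP c26) (ncomp_Pr HP c02).
by rewrite aE6E aA2E.
Qed.
Lemma tyE3 S F : Pr S F -> type_D6A1A1 S = tD6A1A1N F.
Proof.
move=> HP; rewrite /type_D6A1A1 (ncomps_Pr HP) (ncomp_Pr HP c16) (ncomp_Pr HP c01).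
by rewrite aD6E aA1E.
Qed.
Lemma tyE4 S F : Pr S F -> type_A7A1 S = tA7A1N F.
Proof.
move=> HP; rewrite /type_A7A1 (ncomps_Pr HP) (ncomp_Pr HP c07) (ncomp_Pr HP c01).
by rewrite aA7E aA1E.
Qed.
Lemma tyE5 S F : Pr S F -> type_A5A2A1 S = tA5A2A1N F.
Proof.
move=> HP; rewrite /type_A5A2A1 (ncomps_Pr HP) (ncomp_Pr HP c05) (ncomp_Pr HP c02) (ncomp_Pr HP c01).
by rewrite aA5E aA2E aA1E.
Qed.

Lemma rk_le8 : all (fun F => rkN F <= 8) FAM. Proof. by vm_compute. Qed.
Lemma all29 : (size (L8g FAM (fun _ => true)) == 29) && uniq (L8g FAM (fun _ => true)).
Proof. by vm_compute. Qed.
Lemma classif : all (fun F => (rkN F == 8) ==> [|| tE7A1N F, tE6A2N F, tD6A1A1N F, tA7A1N F | tA5A2A1N F]) FAM.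
Proof. by vm_compute. Qed.
Lemma chk1 : checkTg FAM tE7A1N 12 8 1 1. Proof. by vm_compute. Qed.
Lemma chk2 : checkTg FAM tE6A2N 4 7 3 0. Proof. by vm_compute. Qed.
Lemma chk3 : checkTg FAM tD6A1A1N 6 8 1 2. Proof. by vm_compute. Qed.
Lemma chk4 : checkTg FAM tA7A1N 3 8 2 0. Proof. by vm_compute. Qed.
Lemma chk5 : checkTg FAM tA5A2A1N 4 7 3 1. Proof. by vm_compute. Qed.

Theorem lemma3p2 :
  (forall S : {set V}, parabolic S -> prank S <= 8) /\
  #|[set S : {set V} | parabolic S && (prank S == 8)]| = 29 /\
  (forall S : {set V}, parabolic S -> prank S = 8 ->
     [|| type_E7A1 S, type_E6A2 S, type_D6A1A1 S, type_A7A1 S | type_A5A2A1 S]) /\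
  type_class type_E7A1 12 8 1 1 /\
  type_class type_E6A2 4 7 3 0 /\
  type_class type_D6A1A1 6 8 1 2 /\
  type_class type_A7A1 3 8 2 0 /\
  type_class type_A5A2A1 4 7 3 1.
Proof.
split.
  move=> S pS; case: (fwd pS) => F hF HP; rewrite (prank_Pr HP).
  exact: (allP rk_le8 F hF).
split.
  case/andP: all29 => /eqP s29 u29.
  have H := count8g fwd bwd (tyN := fun _ => true) (fun _ _ => erefl) u29.
  exact: (etrans H s29).
split.
  move=> S pS r8; case: (fwd pS) => F hF HP.
  have h8 : rkN F == 8 by rewrite -(prank_Pr HP) r8.
  have := allP classif F hF; rewrite h8 implyTb.
  by rewrite (tyE1 HP) (tyE2 HP) (tyE3 HP) (tyE4 HP) (tyE5 HP).
split; first by apply: (type_class_g fwd bwd (tyN := tE7A1N)) chk1 => S F _; apply: tyE1.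
split; first by apply: (type_class_g fwd bwd (tyN := tE6A2N)) chk2 => S F _; apply: tyE2.
split; first by apply: (type_class_g fwd bwd (tyN := tD6A1A1N)) chk3 => S F _; apply: tyE3.
split; first by apply: (type_class_g fwd bwd (tyN := tA7A1N)) chk4 => S F _; apply: tyE4.
by apply: (type_class_g fwd bwd (tyN := tA5A2A1N)) chk5 => S F _; apply: tyE5.
Qed.
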